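(* There is an absolute constant $C>0$ such that the following holds. Let $R>0$ and let $r\ge 1$ be an integer; set $d=r$. Let $\Omega_1=(-1-d,\,R+d)$, let $\chi_{\Omega_1}$ be its indicator function, let $\eta_d(p)=d^{-1}\eta(p/d)$, and define the cut-off function $\zeta=\eta_d*\chi_{\Omega_1}$, i.e. $\zeta(p)=\int_{\mathbb{R}}\eta_d(p-y)\chi_{\Omega_1}(y)\,\mathrm{d}y$. Define $\psi(p)=\zeta(p)\mathrm{e}^{-p}$. Then $\psi\in C^\infty(\mathbb{R})$, $\operatorname{supp}\psi\subset[-(1+2r),\,R+2r]$, $\psi(p)=\mathrm{e}^{-p}$ for $p\in(-1,R)$, and \[ \|\psi^{(r)}\|_{L^2(\mathbb{R})}^{1/r}\le C\, r^2 . \] In particular, choosing $r\simeq\log(1/\epsilon)$ gives $\|\psi^{(r)}\|_{L^2(\mathbb{R})}^{1/r}\lesssim \log^2(1/\epsilon)$.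
   Context: $\eta$ is the mollifier $\eta(p)=C_\eta^{-1}\exp(1/(p^2-1))$ for $|p|<1$ and $\eta(p)=0$ for $|p|\ge1$, with $C_\eta=\int_{-1}^1\exp(1/(p^2-1))\,\mathrm{d}p$. $\psi^{(r)}$ is the $r$-th derivative of $\psi$. *)

(* Defs.v *)
From Stdlib Require Import Reals.
From Coquelicot Require Import Coquelicot.
Open Scope R_scope.

Definition C_eta : R := RInt (fun p => exp (1 / (p ^ 2 - 1))) (-1) 1.

Definition eta (p : R) : R :=
  if Rlt_dec (Rabs p) 1 then / C_eta * exp (1 / (p ^ 2 - 1)) else 0.

Definition eta_d (d p : R) : R := / d * eta (p / d).

Definition chi_Omega1 (Rr d y : R) : R :=
  if Rlt_dec (-1 - d) y then (if Rlt_dec y (Rr + d) then 1 else 0) else 0.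

(* zeta = eta_d * chi_{Omega_1}; since chi vanishes outside the bounded
   interval Omega_1, the integral over R is the Riemann integral over its closure. *)
Definition zeta (Rr d p : R) : R :=
  RInt (fun y => eta_d d (p - y) * chi_Omega1 Rr d y) (-1 - d) (Rr + d).

Definition psi (Rr d p : R) : R := zeta Rr d p * exp (- p).

(* Main.v *)
Require Import Defs.
From Stdlib Require Import Reals.
From Coquelicot Require Import Coquelicot.
From Stdlib Require Import Lra Lia List.
Open Scope R_scope.

Lemma is_derive_eq (f : R -> R) x l l' : is_derive f x l -> l = l' -> is_derive f x l'.
Proof. intros H ->; exact H. Qed.

Lemma is_derive_cst (c x : R) : is_derive (fun _ : R => c) x 0.
Proof. auto_derive; auto. Qed.

Definition bb (m : nat) (t : R) : R :=
  if Rlt_dec 0 t then exp (- / (2 * t)) * (/ t) ^ m else 0.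

Lemma bb_pos m t : 0 < t -> bb m t = exp (- / (2 * t)) * (/ t) ^ m.
Proof. intros; unfold bb; destruct Rlt_dec; lra. Qed.
Lemma bb_neg m t : t <= 0 -> bb m t = 0.
Proof. intros; unfold bb; destruct Rlt_dec; lra. Qed.
Lemma bb_ge0 m t : 0 <= bb m t.
Proof. unfold bb; destruct Rlt_dec; [|lra].
  apply Rmult_le_pos; [left; apply exp_pos|]. apply pow_le. left; apply Rinv_0_lt_compat; lra. Qed.

Lemma exp_pow x n : exp x ^ n = exp (INR n * x).
Proof. induction n. simpl. rewrite Rmult_0_l, exp_0; ring.
  rewrite S_INR. simpl. rewrite IHn. rewrite <- exp_plus. f_equal; ring. Qed.

Lemma pow_exp_bound (m : nat) (u : R) : 0 <= u -> u ^ m <= INR m ^ m * exp u.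
Proof.
  intros Hu. destruct m as [|m].
  - simpl. pose proof (exp_ineq1_le u). lra.
  - set (n := INR (S m)). assert (Hn : 0 < n) by (apply lt_0_INR; lia).
    assert (H1 : u / n <= exp (u / n - 1)) by (pose proof (exp_ineq1_le (u/n - 1)); lra).
    assert (H2 : (u / n) ^ S m <= exp (u / n - 1) ^ S m).
    { apply pow_incr; split; [|exact H1]. apply Rdiv_le_0_compat; lra. }
    rewrite exp_pow in H2.
    assert (H3 : INR (S m) * (u / n - 1) <= u).
    { fold n. field_simplify; [|lra]. lra. }
    assert (H4: exp (INR (S m) * (u / n - 1)) <= exp u).
    { destruct (Req_dec (INR (S m) * (u / n - 1)) u) as [E|E]; [rewrite E; lra|].
      left; apply exp_increasing; lra. }
    assert (E: u ^ S m = n ^ S m * (u / n) ^ S m).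
    { unfold Rdiv. rewrite Rpow_mult_distr. rewrite (Rmult_comm (u ^ S m)), <- Rmult_assoc,
        <- Rpow_mult_distr, Rinv_r, pow1; [ring|lra]. }
    rewrite E. fold n. apply Rmult_le_compat_l; [left; apply pow_lt; lra|]. lra.
Qed.

Lemma bb_bound m t : bb m t <= 2 ^ m * INR m ^ m.
Proof.
  destruct (Rlt_dec 0 t) as [Ht|Ht]; [|rewrite bb_neg by lra; apply Rmult_le_pos; apply pow_le; [lra| apply pos_INR]].
  rewrite bb_pos by lra. set (u := / (2 * t)).
  assert (Hu : 0 < u) by (unfold u; apply Rinv_0_lt_compat; lra).
  replace (/ t) with (2 * u) by (unfold u; field; lra).
  rewrite Rpow_mult_distr.
  pose proof (pow_exp_bound m u (Rlt_le _ _ Hu)).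
  assert (exp (- u) * u ^ m <= INR m ^ m).
  { replace (INR m ^ m) with (exp (-u) * (INR m ^ m * exp u)).
    apply Rmult_le_compat_l; [left; apply exp_pos| lra].
    rewrite (Rmult_comm (INR m ^ m)), <- Rmult_assoc, <- exp_plus.
    replace (-u+u) with 0 by ring. rewrite exp_0; ring. }
  assert (0 < 2 ^ m) by (apply pow_lt; lra). nra.
Qed.

Lemma bb_shift m t : bb m t = t * bb (S m) t.
Proof.
  destruct (Rlt_dec 0 t) as [Ht|Ht]; [|rewrite !bb_neg by lra; ring].
  rewrite !bb_pos by lra. simpl. field. lra.
Qed.

Lemma bb_sq m t : Rabs (bb m t) <= (2 ^ S (S m) * INR (S (S m)) ^ S (S m)) * (t * t).
Proof.
  rewrite bb_shift, bb_shift. pose proof (bb_bound (S (S m)) t). pose proof (bb_ge0 (S (S m)) t).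
  destruct (Rlt_dec 0 t) as [Ht|Ht].
  - rewrite Rabs_right. nra. apply Rle_ge. apply Rmult_le_pos; [lra|]. apply Rmult_le_pos; lra.
  - rewrite (bb_neg (S (S m)) t) by lra. rewrite !Rmult_0_r, Rabs_R0. 
    apply Rmult_le_pos; [apply Rmult_le_pos; apply pow_le; [lra|apply pos_INR]| nra].
Qed.

Lemma is_derive_invpow m t : t <> 0 ->
  is_derive (fun t => (/ t) ^ m) t (- INR m * (/ t) ^ S m).
Proof.
  intros Ht. induction m.
  - simpl. apply is_derive_eq with 0; [apply is_derive_cst|]. simpl; ring.
  - rewrite S_INR. eapply is_derive_eq.
    + apply (is_derive_mult (fun t => / t) (fun t => (/ t) ^ m)).
      * apply is_derive_eq with (- / t ^ 2). auto_derive; [exact Ht| field; exact Ht].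
        reflexivity.
      * exact IHm.
      * intros; apply Rmult_comm.
    + unfold plus, mult; simpl. field. exact Ht.
Qed.

Lemma is_derive_bb m t :
  is_derive (bb m) t (- INR m * bb (S m) t + / 2 * bb (S (S m)) t).
Proof.
  destruct (Rtotal_order t 0) as [Ht|[Ht|Ht]].
  - rewrite !bb_neg by lra.
    apply is_derive_ext_loc with (fun _ => 0).
    + apply locally_interval with m_infty 0; simpl; auto.
      intros y _ Hy. rewrite bb_neg by lra. reflexivity.
    + apply is_derive_eq with 0; [apply is_derive_cst|]. simpl; ring.
  - subst t. rewrite !bb_neg by lra. replace (- INR m * 0 + / 2 * 0) with 0 by ring.
    apply is_derive_Reals. intros eps Heps.
    set (C := 2 ^ S (S m) * INR (S (S m)) ^ S (S m)).
    assert (HC : 0 < C) by (unfold C; apply Rmult_lt_0_compat; apply pow_lt; [lra| apply lt_0_INR; lia]).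
    assert (Hd : 0 < eps / C) by (apply Rdiv_lt_0_compat; lra).
    exists (mkposreal _ Hd). intros h Hh0 Hh. simpl in Hh.
    rewrite Rplus_0_l, (bb_neg m 0) by lra. rewrite Rminus_0_r, Rminus_0_r.
    pose proof (bb_sq m h) as B. fold C in B.
    rewrite Rabs_div by exact Hh0.
    assert (Hh1 : 0 < Rabs h) by (apply Rabs_pos_lt, Hh0).
    apply Rle_lt_trans with (C * Rabs h).
    { apply Rmult_le_reg_r with (Rabs h); [exact Hh1|]. unfold Rdiv.
      rewrite Rmult_assoc, Rinv_l, Rmult_1_r by lra.
      replace (C * Rabs h * Rabs h) with (C * (h * h)); [exact B|].
      rewrite Rmult_assoc, <- Rabs_mult. rewrite Rabs_right; [reflexivity|]. apply Rle_ge, Rle_0_sqr. }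
    apply Rlt_le_trans with (C * (eps / C)). apply Rmult_lt_compat_l; lra.
    right; field; lra.
  - rewrite !bb_pos by lra.
    apply is_derive_ext_loc with (fun t => exp (- / (2 * t)) * (/ t) ^ m).
    + apply locally_interval with 0 p_infty; simpl; auto.
      intros y Hy _. rewrite bb_pos by lra. reflexivity.
    + eapply is_derive_eq.
      * apply (is_derive_mult (fun t => exp (- / (2 * t))) (fun t => (/ t) ^ m)).
        -- apply (is_derive_comp exp (fun t => - / (2 * t)) t (exp (- / (2 * t))) (/ (2 * t ^ 2))).
           apply is_derive_exp.
           auto_derive; [lra| field; lra].
        -- apply is_derive_invpow. lra.
        -- intros; apply Rmult_comm.
      * unfold plus, mult, scal; simpl. unfold mult; simpl. field. lra.
Qed.


Definition trm := (R * nat * nat)%type.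

Fixpoint evalL (L : list trm) (x : R) : R :=
  match L with
  | nil => 0
  | (c, m, j) :: L' => c * bb m (1 - x) * bb j (1 + x) + evalL L' x
  end.

Fixpoint dL (L : list trm) : list trm :=
  match L with
  | nil => nil
  | (c, m, j) :: L' =>
      (c * INR m, S m, j) :: (- c / 2, S (S m), j) :: (- c * INR j, m, S j)
        :: (c / 2, m, S (S j)) :: dL L'
  end.

Lemma is_derive_bb1 m x :
  is_derive (fun x => bb m (1 - x)) x (INR m * bb (S m) (1 - x) - / 2 * bb (S (S m)) (1 - x)).
Proof.
  eapply is_derive_eq.
  - apply (is_derive_comp (bb m) (fun x => 1 - x) x (- INR m * bb (S m) (1 - x) + / 2 * bb (S (S m)) (1 - x)) (-1)).
    apply is_derive_bb. auto_derive; auto; ring.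
  - unfold scal; simpl; unfold mult; simpl. ring.
Qed.

Lemma is_derive_bb2 m x :
  is_derive (fun x => bb m (1 + x)) x (- INR m * bb (S m) (1 + x) + / 2 * bb (S (S m)) (1 + x)).
Proof.
  eapply is_derive_eq.
  - apply (is_derive_comp (bb m) (fun x => 1 + x) x (- INR m * bb (S m) (1 + x) + / 2 * bb (S (S m)) (1 + x)) 1).
    apply is_derive_bb. auto_derive; auto; ring.
  - unfold scal; simpl; unfold mult; simpl. ring.
Qed.

Lemma is_derive_evalL L x : is_derive (evalL L) x (evalL (dL L) x).
Proof.
  induction L as [|[[c m] j] L IH].
  - simpl. apply is_derive_cst.
  - simpl. eapply is_derive_eq.
    + apply (is_derive_plus (fun x => c * bb m (1 - x) * bb j (1 + x)) (evalL L)); [|exact IH].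
      apply (is_derive_mult (fun x => c * bb m (1 - x)) (fun x => bb j (1 + x))).
      * apply is_derive_scal. apply is_derive_bb1.
      * apply is_derive_bb2.
      * intros; apply Rmult_comm.
    + unfold plus, mult; simpl. field.
Qed.

Fixpoint wt (L : list trm) : R :=
  match L with nil => 0 | (c, _, _) :: L' => Rabs c + wt L' end.

Definition idx_le (K : nat) (L : list trm) : Prop :=
  List.Forall (fun t : trm => let '(c, m, j) := t in (m + j <= K)%nat) L.

Lemma wt_ge0 L : 0 <= wt L.
Proof. induction L as [|[[c m] j] L IH]; simpl; [lra|]. pose proof (Rabs_pos c); lra. Qed.

Lemma dL_idx K L : idx_le K L -> idx_le (S (S K)) (dL L).
Proof.
  unfold idx_le. induction 1 as [|[[c m] j] L Hx HL IH]; simpl; [constructor|].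
  do 4 (apply Forall_cons; [lia|]). exact IH.
Qed.

Lemma wt_dL K L : idx_le K L -> wt (dL L) <= (INR K + 1) * wt L.
Proof.
  unfold idx_le. induction 1 as [|[[c m] j] L Hx HL IH]; simpl; [lra|].
  assert (Hmj : INR m + INR j <= INR K) by (rewrite <- plus_INR; apply le_INR; exact Hx).
  pose proof (pos_INR m). pose proof (pos_INR j).
  rewrite !Rabs_mult, Rabs_Ropp. unfold Rdiv. rewrite !Rabs_mult, Rabs_Ropp.
  rewrite (Rabs_right (INR m)), (Rabs_right (INR j)), (Rabs_right (/ 2)) by lra.
  pose proof (Rabs_pos c). nra.
Qed.

Lemma evalL_bound K L x : idx_le K L ->
  Rabs (evalL L x) <= wt L * (2 * INR K + 2) ^ K.
Proof.
  unfold idx_le. induction 1 as [|[[c m] j] L Hx HL IH]; simpl.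
  - rewrite Rabs_R0; lra.
  - eapply Rle_trans; [apply Rabs_triang|].
    rewrite Rmult_plus_distr_r. apply Rplus_le_compat; [|exact IH].
    rewrite !Rabs_mult. rewrite Rmult_assoc. apply Rmult_le_compat_l; [apply Rabs_pos|].
    rewrite (Rabs_right (bb m _)), (Rabs_right (bb j _)) by (apply Rle_ge, bb_ge0).
    assert (Hb : forall k t, (k <= K)%nat -> bb k t <= (2 * INR K + 2) ^ k).
    { intros k t Hk. eapply Rle_trans; [apply bb_bound|]. rewrite <- Rpow_mult_distr.
      apply pow_incr. split. apply Rmult_le_pos; [lra|apply pos_INR].
      apply le_INR in Hk. lra. }
    assert (HK : 1 <= 2 * INR K + 2) by (pose proof (pos_INR K); lra).
    eapply Rle_trans.
    + apply Rmult_le_compat; try apply bb_ge0; apply Hb; lia.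
    + rewrite <- pow_add. apply Rle_pow; [exact HK|exact Hx].
Qed.

Fixpoint Lk (n : nat) : list trm :=
  match n with O => (1, O, O) :: nil | S n' => dL (Lk n') end.

Lemma Lk_idx n : idx_le (2 * n) (Lk n).
Proof.
  induction n; simpl.
  - repeat constructor.
  - replace (S (n + S (n + 0)))%nat with (S (S (2 * n)))%nat by lia. apply dL_idx; exact IHn.
Qed.

Lemma Lk_wt n : wt (Lk n) <= (2 * INR n + 1) ^ n.
Proof.
  induction n.
  - simpl. rewrite Rabs_R1. lra.
  - simpl Lk. eapply Rle_trans; [apply wt_dL, Lk_idx|].
    rewrite mult_INR. simpl (INR 2).
    replace (2 * INR (S n) + 1) with (2 * INR n + 3) by (rewrite S_INR; ring).
    simpl pow. apply Rmult_le_compat. pose proof (pos_INR n); lra. apply wt_ge0. lra.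
    eapply Rle_trans; [exact IHn|]. apply pow_incr. pose proof (pos_INR n); lra.
Qed.

Lemma Lk_bound n x : Rabs (evalL (Lk n) x) <= (4 * INR n + 2) ^ (3 * n).
Proof.
  eapply Rle_trans; [apply evalL_bound, Lk_idx|].
  rewrite mult_INR. simpl (INR 2).
  replace (2 * (2 * INR n) + 2) with (4 * INR n + 2) by ring.
  replace (3 * n)%nat with (n + 2 * n)%nat by lia. rewrite pow_add.
  apply Rmult_le_compat. apply wt_ge0. apply pow_le; pose proof (pos_INR n); lra.
  eapply Rle_trans; [apply Lk_wt|]. apply pow_incr. pose proof (pos_INR n); lra.
  right; f_equal; ring.
Qed.

Lemma evalL_out L x : 1 <= Rabs x -> evalL L x = 0.
Proof.
  intros Hx. induction L as [|[[c m] j] L IH]; simpl; [reflexivity|]. rewrite IH.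
  destruct (Rle_dec 0 x).
  - rewrite Rabs_right in Hx by lra. rewrite (bb_neg m) by lra. ring.
  - rewrite Rabs_left in Hx by lra. rewrite (bb_neg j) by lra. ring.
Qed.

Lemma Lk0 x : evalL (Lk 0) x = if Rlt_dec (Rabs x) 1 then exp (1 / (x ^ 2 - 1)) else 0.
Proof.
  destruct (Rlt_dec (Rabs x) 1) as [H|H].
  - simpl. apply Rabs_def2 in H. destruct H.
    rewrite !bb_pos by lra. simpl. rewrite Rmult_1_l, !Rmult_1_r, <- exp_plus. rewrite Rplus_0_r. f_equal. field. repeat split; try lra; nra.
  - rewrite evalL_out; [reflexivity|lra].
Qed.


Definition chain (F : nat -> R -> R) := forall n x, is_derive (F n) x (F (S n) x).

Lemma chain_Derive_n F f : chain F -> (forall x, f x = F 0%nat x) ->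
  forall n x, Derive_n f n x = F n x.
Proof.
  intros HF Hf n. induction n; intros x; simpl; [apply Hf|].
  rewrite (Derive_ext _ (F n) x IHn). apply is_derive_unique, HF.
Qed.

Lemma chain_ex F f : chain F -> (forall x, f x = F 0%nat x) ->
  forall n x, ex_derive_n f n x.
Proof.
  intros HF Hf n x. destruct n; simpl; [exact I|].
  apply ex_derive_ext with (F n). intros t; symmetry; apply (chain_Derive_n F f HF Hf).
  eexists; apply HF.
Qed.

Lemma chain_cont F : chain F -> forall n x, continuous (F n) x.
Proof. intros HF n x. apply (ex_derive_continuous (F n) x). eexists; apply HF. Qed.

Fixpoint mixF (n : nat) (F : nat -> R -> R) : R -> R :=
  match n with
  | O => F O
  | S n' => fun x => mixF n' (fun k => F (S k)) x - mixF n' F x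
  end.

Lemma mix_deriv n : forall F, chain F -> forall x,
  is_derive (mixF n F) x (mixF n (fun k => F (S k)) x).
Proof.
  induction n; intros F HF x; simpl; [apply HF|].
  assert (HF' : chain (fun k => F (S k))) by (intros k y; apply HF).
  eapply is_derive_eq.
  - apply (is_derive_minus (mixF n (fun k => F (S k))) (mixF n F)); [apply IHn, HF'|apply IHn, HF].
  - unfold minus, plus, opp; simpl. ring.
Qed.

Lemma mix_bound n : forall F B, (forall k x, (k <= n)%nat -> Rabs (F k x) <= B) ->
  forall x, Rabs (mixF n F x) <= 2 ^ n * B.
Proof.
  induction n; intros F B HB x; simpl.
  - rewrite Rmult_1_l. apply HB; lia.
  - eapply Rle_trans; [apply Rabs_triang|]. rewrite Rabs_Ropp.
    assert (H1 : Rabs (mixF n (fun k => F (S k)) x) <= 2 ^ n * B) by (apply IHn; intros; apply HB; lia).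
    assert (H2 : Rabs (mixF n F x) <= 2 ^ n * B) by (apply IHn; intros; apply HB; lia).
    lra.
Qed.

Lemma mix_zero n : forall F x, (forall k, F k x = 0) -> mixF n F x = 0.
Proof.
  induction n; intros F x H; simpl; [apply H|]. rewrite !IHn; auto. ring.
Qed.

Lemma mix_exp_chain F : chain F ->
  chain (fun n x => mixF n F x * exp (- x)).
Proof.
  intros HF n x. eapply is_derive_eq.
  - apply (is_derive_mult (mixF n F) (fun x => exp (- x))).
    + apply mix_deriv, HF.
    + apply is_derive_eq with (exp (- x) * (-1)). auto_derive; auto; ring. reflexivity.
    + intros; apply Rmult_comm.
  - unfold plus, mult; simpl. ring.
Qed.

Lemma is_RInt_zero u a : is_RInt (fun _ => 0) u a 0.
Proof. pose proof (is_RInt_const u a 0) as C.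
  unfold scal in C; simpl in C; unfold mult in C; simpl in C. rewrite Rmult_0_r in C. exact C. Qed.

Lemma is_RInt_gen_compact f a b : a <= b -> ex_RInt f a b ->
  (forall x, (x < a \/ b < x) -> f x = 0) ->
  is_RInt_gen f (Rbar_locally m_infty) (Rbar_locally p_infty) (RInt f a b).
Proof.
  intros Hab Hex Hz. unfold is_RInt_gen, filterlimi, filter_le, filtermapi.
  intros P HP. apply Filter_prod with (fun u => u < a) (fun v => b < v).
  - exists a; auto.
  - exists b; auto.
  - intros u v Hu Hv. exists (RInt f a b). split; [|apply locally_singleton, HP].
    simpl.
    assert (Z1 : is_RInt f u a 0).
    { apply is_RInt_ext with (fun _ => 0).
      - intros x Hx. rewrite Rmin_left in Hx by lra. rewrite Rmax_right in Hx by lra.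
        symmetry; apply Hz; lra.
      - apply is_RInt_zero. }
    assert (Z2 : is_RInt f b v 0).
    { apply is_RInt_ext with (fun _ => 0).
      - intros x Hx. rewrite Rmin_left in Hx by lra. rewrite Rmax_right in Hx by lra.
        symmetry; apply Hz; lra.
      - apply is_RInt_zero. }
    pose proof (is_RInt_Chasles f u a v _ _ Z1 (is_RInt_Chasles f a b v _ _ (RInt_correct f a b Hex) Z2)) as H.
    replace (RInt f a b) with (plus 0 (plus (RInt f a b) 0)); [exact H|].
    unfold plus; simpl. ring.
Qed.

Lemma RInt_exp2 a b : a <= b -> is_RInt (fun x => exp (- (2 * x))) a b ((exp (- (2 * a)) - exp (- (2 * b))) / 2).
Proof.
  intros Hab.
  replace ((exp (- (2 * a)) - exp (- (2 * b))) / 2) with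
    (minus ((fun x => - exp (- (2 * x)) / 2) b) ((fun x => - exp (- (2 * x)) / 2) a))
    by (unfold minus, plus, opp; simpl; field).
  apply (is_RInt_derive (fun x => - exp (- (2 * x)) / 2) (fun x => exp (- (2 * x)))).
  - intros x _. auto_derive; auto. field.
  - intros x _. apply (ex_derive_continuous (fun x => exp (- (2 * x)))). auto_derive; auto.
Qed.

Lemma L2_bound h a b M : a <= b -> (forall x, continuous h x) ->
  (forall x, Rabs (h x) <= M * exp (- x)) ->
  RInt (fun x => h x ^ 2) a b <= M ^ 2 * exp (- (2 * a)).
Proof.
  intros Hab Hc HM.
  assert (Hex : ex_RInt (fun x => h x ^ 2) a b).
  { apply (ex_RInt_continuous (V := R_CompleteNormedModule)). intros z _. apply (continuous_mult h (fun x => h x ^ 1)); [apply Hc|].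
    apply (continuous_mult h (fun _ => 1)); [apply Hc|apply continuous_const]. }
  eapply Rle_trans.
  - apply (is_RInt_le (fun x => h x ^ 2) (fun x => M ^ 2 * exp (- (2 * x))) a b _
            (M ^ 2 * ((exp (- (2 * a)) - exp (- (2 * b))) / 2)) Hab (RInt_correct _ _ _ Hex)).
    + apply (is_RInt_scal (fun x => exp (- (2 * x))) a b (M ^ 2)). apply RInt_exp2; exact Hab.
    + intros x _. pose proof (HM x). pose proof (Rabs_pos (h x)).
      replace (- (2 * x)) with (- x + - x) by ring. rewrite exp_plus.
      rewrite <- pow2_abs. simpl.
      pose proof (exp_pos (- x)). nra.
  - pose proof (exp_pos (- (2 * b))). pose proof (exp_pos (- (2*a))).
    assert (0 <= M ^ 2) by (apply pow2_ge_0). nra.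
Qed.


Lemma cont_ex (f : R -> R) a b : (forall x, continuous f x) -> ex_RInt f a b.
Proof. intros H. apply (ex_RInt_continuous (V := R_CompleteNormedModule)). intros; apply H. Qed.

Lemma T_cont k x : continuous (evalL (Lk k)) x.
Proof. apply (ex_derive_continuous (evalL (Lk k))). eexists; apply is_derive_evalL. Qed.

Lemma T0_in x : -1 < x < 1 -> evalL (Lk 0) x = exp (1 / (x ^ 2 - 1)).
Proof. intros H. rewrite Lk0. destruct Rlt_dec as [_|n]; [reflexivity|]. exfalso; apply n, Rabs_def1; lra. Qed.

Lemma C_eta_eq : C_eta = RInt (evalL (Lk 0)) (-1) 1.
Proof.
  unfold C_eta. apply RInt_ext. intros x Hx. rewrite Rmin_left, Rmax_right in Hx by lra.
  symmetry; apply T0_in; lra.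
Qed.

Lemma exp_m2 : / 9 <= exp (-2).
Proof.
  replace (-2) with (- (2)) by ring. rewrite exp_Ropp. apply Rinv_le_contravar; [apply exp_pos|].
  replace 2 with (1 + 1) by ring. rewrite exp_plus. pose proof exp_le_3. pose proof (exp_pos 1). nra.
Qed.

Lemma T0_ge0 x : 0 <= evalL (Lk 0) x.
Proof. simpl. pose proof (bb_ge0 0 (1 - x)). pose proof (bb_ge0 0 (1 + x)). nra. Qed.

Lemma C_eta_lb : / 9 <= C_eta.
Proof.
  rewrite C_eta_eq.
  assert (Hex : forall a b, ex_RInt (evalL (Lk 0)) a b) by (intros; apply cont_ex, T_cont).
  rewrite <- (RInt_Chasles _ (-1) (-/2) 1) by auto.
  rewrite <- (RInt_Chasles _ (-/2) (/2) 1) by auto.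
  unfold plus; simpl.
  assert (H1 : 0 <= RInt (evalL (Lk 0)) (-1) (-/2)) by (apply RInt_ge_0; auto; [lra|intros; apply T0_ge0]).
  assert (H3 : 0 <= RInt (evalL (Lk 0)) (/2) 1) by (apply RInt_ge_0; auto; [lra|intros; apply T0_ge0]).
  assert (H2 : / 9 <= RInt (evalL (Lk 0)) (-/2) (/2)).
  { replace (/ 9) with (RInt (fun _ => / 9) (-/2) (/2)).
    - apply RInt_le; auto. lra. apply cont_ex; intros; apply continuous_const.
      intros x Hx. rewrite T0_in by lra. eapply Rle_trans; [apply exp_m2|].
      destruct (Req_dec (-2) (1 / (x ^ 2 - 1))) as [E|E]; [rewrite E; lra|].
      left; apply exp_increasing.
      assert (0 <= x ^ 2 < / 4) by (simpl; split; nra).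
      apply Rlt_le_trans with (-4/3). lra.
      unfold Rdiv. rewrite Rmult_1_l.
      apply Rmult_le_reg_r with (1 - x ^ 2). lra.
      replace (/ (x ^ 2 - 1) * (1 - x ^ 2)) with (-1) by (field; lra). lra.
    - rewrite RInt_const. unfold scal; simpl; unfold mult; simpl. field. }
  simpl in H1, H2, H3. lra.
Qed.

Lemma C_eta_pos : 0 < C_eta.
Proof. pose proof C_eta_lb. assert (0 < / 9) by lra. lra. Qed.

Definition E (k : nat) (x : R) : R := / C_eta * evalL (Lk k) x.

Lemma E_chain : chain E.
Proof. intros n x. unfold E. apply is_derive_scal, is_derive_evalL. Qed.

Lemma eta_E x : eta x = E 0 x.
Proof. unfold eta, E. rewrite Lk0. destruct Rlt_dec; ring. Qed.

Definition N (d : R) (k : nat) (s : R) : R := / d * (/ d) ^ k * E k (s / d).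

Lemma N_chain d : d <> 0 -> chain (N d).
Proof.
  intros Hd n x. unfold N. eapply is_derive_eq.
  - apply is_derive_scal.
    apply (is_derive_comp (E n) (fun s => s / d) x (E (S n) (x / d)) (/ d)).
    + apply E_chain.
    + apply is_derive_eq with (1 / d). auto_derive; [auto|field; auto]. simpl; field; auto.
  - unfold scal; simpl; unfold mult; simpl. ring.
Qed.

Lemma eta_d_N d s : eta_d d s = N d 0 s.
Proof. unfold eta_d, N. rewrite eta_E. simpl. ring. Qed.

Lemma eta_d_cont d x : d <> 0 -> continuous (eta_d d) x.
Proof.
  intros Hd. apply continuous_ext with (N d 0). intros; symmetry; apply eta_d_N.
  apply chain_cont, N_chain, Hd.
Qed.

Lemma eta_d_ex d a b : d <> 0 -> ex_RInt (eta_d d) a b.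
Proof. intros; apply cont_ex; intros; apply eta_d_cont; auto. Qed.

Lemma E_zero k x : 1 <= Rabs x -> E k x = 0.
Proof. intros H. unfold E. rewrite evalL_out by exact H. ring. Qed.

Lemma N_zero d k s : 0 < d -> d <= Rabs s -> N d k s = 0.
Proof.
  intros Hd Hs. unfold N. rewrite E_zero. ring.
  unfold Rdiv. rewrite Rabs_mult, Rabs_inv, (Rabs_right d) by lra.
  apply Rmult_le_reg_r with d; auto. rewrite Rmult_assoc, Rinv_l by lra. lra.
Qed.

Lemma eta_d_zero d s : 0 < d -> d <= Rabs s -> eta_d d s = 0.
Proof. intros; rewrite eta_d_N; apply N_zero; auto. Qed.

Lemma eta_d_ge0 d s : 0 < d -> 0 <= eta_d d s.
Proof.
  intros Hd. rewrite eta_d_N. unfold N, E. simpl. rewrite Rmult_1_r.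
  pose proof C_eta_pos. pose proof (T0_ge0 (s / d)).
  apply Rmult_le_pos; [left; apply Rinv_0_lt_compat; lra|].
  apply Rmult_le_pos; [left; apply Rinv_0_lt_compat; lra|]. simpl in H0. exact H0.
Qed.

Lemma N_bound d k s : 0 < d ->
  Rabs (N d k s) <= (/ d) ^ S k * (9 * (4 * INR k + 2) ^ (3 * k)).
Proof.
  intros Hd. unfold N, E.
  assert (Hi : 0 < / d) by (apply Rinv_0_lt_compat; lra).
  assert (0 < (/ d) ^ k) by (apply pow_lt; auto).
  pose proof (Lk_bound k (s / d)). pose proof C_eta_lb. pose proof C_eta_pos.
  assert (0 < / C_eta) by (apply Rinv_0_lt_compat; lra).
  rewrite Rabs_mult, (Rabs_right (/ d * (/ d) ^ k)) by (apply Rle_ge; apply Rmult_le_pos; lra).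
  rewrite Rabs_mult, (Rabs_right (/ C_eta)) by lra.
  assert (/ C_eta <= 9).
  { replace 9 with (/ / 9) by (field). apply Rinv_le_contravar; lra. }
  pose proof (Rabs_pos (evalL (Lk k) (s / d))).
  assert (/ C_eta * Rabs (evalL (Lk k) (s / d)) <= 9 * (4 * INR k + 2) ^ (3 * k)).
  { apply Rmult_le_compat; lra. }
  change ((/ d) ^ S k) with (/ d * (/ d) ^ k).
  apply Rmult_le_compat_l; [|exact H6]. left; apply Rmult_lt_0_compat; auto.
Qed.


Definition Phi (d t : R) : R := RInt (eta_d d) (- d) t.

Lemma Phi_deriv d t : d <> 0 -> is_derive (Phi d) t (eta_d d t).
Proof.
  intros Hd. apply (is_derive_RInt (eta_d d) (Phi d) (- d) t).
  - apply filter_forall. intros b. unfold Phi. apply (RInt_correct (V := R_CompleteNormedModule)), eta_d_ex, Hd.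
  - apply eta_d_cont, Hd.
Qed.

Lemma RInt_zero_fun (f : R -> R) a b : (forall x, Rmin a b < x < Rmax a b -> f x = 0) -> RInt f a b = 0.
Proof.
  intros H. rewrite (RInt_ext f (fun _ => 0)) by exact H. rewrite RInt_const.
  unfold scal; simpl; unfold mult; simpl. ring.
Qed.

Lemma Phi_left d t : 0 < d -> t <= - d -> Phi d t = 0.
Proof.
  intros Hd Ht. unfold Phi. apply RInt_zero_fun. intros x Hx.
  rewrite Rmin_right, Rmax_left in Hx by lra.
  apply eta_d_zero; auto. rewrite Rabs_left by lra. lra.
Qed.

Lemma Phi_d d : 0 < d -> Phi d d = 1.
Proof.
  intros Hd. unfold Phi.
  assert (H := RInt_comp_lin (eta_d d) d 0 (-1) 1 (eta_d_ex d _ _ ltac:(lra))).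
  replace (d * -1 + 0) with (- d) in H by ring. replace (d * 1 + 0) with d in H by ring.
  rewrite <- H.
  rewrite (RInt_ext _ (fun y => scal (/ C_eta) (exp (1 / (y ^ 2 - 1))))).
  - rewrite (RInt_scal (V := R_CompleteNormedModule)). fold C_eta. unfold scal; simpl; unfold mult; simpl.
    pose proof C_eta_pos. field; lra.
    unfold C_eta in *. apply ex_RInt_ext with (evalL (Lk 0)).
    + intros x Hx. rewrite Rmin_left, Rmax_right in Hx by lra. apply T0_in; lra.
    + apply cont_ex, T_cont.
  - intros x Hx. rewrite Rmin_left, Rmax_right in Hx by lra.
    unfold scal; simpl; unfold mult; simpl. unfold eta_d.
    replace ((d * x + 0) / d) with x by (field; lra).
    unfold eta. destruct Rlt_dec as [_|n]. simpl. pose proof C_eta_pos. field; split; lra. exfalso; apply n, Rabs_def1; lra.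
Qed.

Lemma Phi_chasles d s t : 0 < d -> Phi d t = Phi d s + RInt (eta_d d) s t.
Proof.
  intros Hd. unfold Phi. rewrite <- (RInt_Chasles _ (- d) s t); try apply eta_d_ex; try lra.
  reflexivity.
Qed.

Lemma Phi_right d t : 0 < d -> d <= t -> Phi d t = 1.
Proof.
  intros Hd Ht. rewrite (Phi_chasles d d t Hd), Phi_d by auto.
  rewrite RInt_zero_fun. ring. intros x Hx.
  rewrite Rmin_left, Rmax_right in Hx by lra.
  apply eta_d_zero; auto. rewrite Rabs_right by lra. lra.
Qed.

Lemma Phi_mono d s t : 0 < d -> s <= t -> Phi d s <= Phi d t.
Proof.
  intros Hd Hst. rewrite (Phi_chasles d s t Hd).
  assert (0 <= RInt (eta_d d) s t). apply RInt_ge_0; auto. apply eta_d_ex; lra.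
  intros; apply eta_d_ge0; auto. lra.
Qed.

Lemma Phi_01 d t : 0 < d -> 0 <= Phi d t <= 1.
Proof.
  intros Hd. split.
  - rewrite <- (Phi_left d (Rmin t (- d)) Hd (Rmin_r _ _)). apply Phi_mono; auto. apply Rmin_l.
  - rewrite <- (Phi_right d (Rmax t d) Hd (Rmax_r _ _)). apply Phi_mono; auto. apply Rmax_l.
Qed.

Lemma zeta_Phi Rr d p : 0 < d -> 0 < Rr ->
  zeta Rr d p = Phi d (p + 1 + d) - Phi d (p - Rr - d).
Proof.
  intros Hd HR. unfold zeta.
  rewrite (RInt_ext _ (fun y => opp (scal (-1) (eta_d d (-1 * y + p))))).
  2: { intros x Hx. rewrite Rmin_left, Rmax_right in Hx by lra.
       unfold chi_Omega1. destruct (Rlt_dec (-1 - d) x); [|lra]. destruct (Rlt_dec x (Rr + d)); [|lra].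
       unfold opp, scal; simpl; unfold mult; simpl. replace (-1 * x + p) with (p - x) by ring. ring. }
  rewrite (RInt_opp (V := R_CompleteNormedModule)).
  2: { apply cont_ex. intros x. apply (continuous_scal_r (-1) (fun y => eta_d d (-1 * y + p))).
       apply continuous_comp. apply (ex_derive_continuous (fun y => -1 * y + p)). auto_derive; auto.
       apply eta_d_cont; lra. }
  rewrite (RInt_comp_lin (V := R_CompleteNormedModule)) by (apply eta_d_ex; lra).
  replace (-1 * (-1 - d) + p) with (p + 1 + d) by ring.
  replace (-1 * (Rr + d) + p) with (p - Rr - d) by ring.
  rewrite (Phi_chasles d (p + 1 + d) (p - Rr - d) Hd).
  unfold opp; simpl. ring.
Qed.

Lemma zeta_01 Rr d p : 0 < d -> 0 < Rr -> Rabs (zeta Rr d p) <= 1.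
Proof.
  intros Hd HR. rewrite zeta_Phi by auto.
  pose proof (Phi_01 d (p + 1 + d) Hd). pose proof (Phi_01 d (p - Rr - d) Hd).
  pose proof (Phi_mono d (p - Rr - d) (p + 1 + d) Hd ltac:(lra)).
  rewrite Rabs_right by lra. lra.
Qed.


Definition Z (Rr d : R) (k : nat) : R -> R :=
  match k with
  | O => zeta Rr d
  | S j => fun p => N d j (p + 1 + d) - N d j (p - Rr - d)
  end.

Lemma Z_chain Rr d : 0 < d -> 0 < Rr -> chain (Z Rr d).
Proof.
  intros Hd HR n x. destruct n as [|j]; simpl.
  - apply is_derive_ext with (fun p => Phi d (p + 1 + d) - Phi d (p - Rr - d)).
    { intros t; symmetry; apply zeta_Phi; auto. }
    eapply is_derive_eq.
    + apply (is_derive_minus (fun p => Phi d (p + 1 + d)) (fun p => Phi d (p - Rr - d))).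
      * apply (is_derive_comp (Phi d) (fun p => p + 1 + d) x (eta_d d (x + 1 + d)) 1).
        apply Phi_deriv; lra. auto_derive; auto; ring.
      * apply (is_derive_comp (Phi d) (fun p => p - Rr - d) x (eta_d d (x - Rr - d)) 1).
        apply Phi_deriv; lra. auto_derive; auto; ring.
    + unfold minus, plus, opp, scal; simpl; unfold mult; simpl. rewrite !eta_d_N. ring.
  - eapply is_derive_eq.
    + apply (is_derive_minus (fun p => N d j (p + 1 + d)) (fun p => N d j (p - Rr - d))).
      * apply (is_derive_comp (N d j) (fun p => p + 1 + d) x (N d (S j) (x + 1 + d)) 1).
        apply N_chain; lra. auto_derive; auto; ring.
      * apply (is_derive_comp (N d j) (fun p => p - Rr - d) x (N d (S j) (x - Rr - d)) 1).
        apply N_chain; lra. auto_derive; auto; ring.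
    + unfold minus, plus, opp, scal; simpl; unfold mult; simpl. ring.
Qed.

Lemma Z_zero Rr d k x : 0 < d -> 0 < Rr -> (x < - (1 + 2 * d) \/ Rr + 2 * d < x) -> Z Rr d k x = 0.
Proof.
  intros Hd HR Hx. destruct k as [|j]; simpl.
  - rewrite zeta_Phi by auto. destruct Hx.
    + rewrite !Phi_left by (auto; lra). ring.
    + rewrite !Phi_right by (auto; lra). ring.
  - destruct Hx.
    + rewrite !N_zero; auto; try ring; rewrite Rabs_left; lra.
    + rewrite !N_zero; auto; try ring; rewrite Rabs_right; lra.
Qed.

Lemma Z_bound Rr (r : nat) k x : (1 <= r)%nat -> 0 < Rr -> (k <= r)%nat ->
  Rabs (Z Rr (INR r) k x) <= 18 * 216 ^ r * INR r ^ (2 * r).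
Proof.
  intros Hr HR Hk. set (d := INR r).
  assert (Hd1 : 1 <= d) by (unfold d; apply (le_INR 1); lia).
  assert (Hp : 1 <= 216 ^ r * d ^ (2 * r)).
  { rewrite <- (Rmult_1_l 1). apply Rmult_le_compat; try lra; apply pow_R1_Rle; lra. }
  destruct k as [|j]; simpl Z.
  - eapply Rle_trans; [apply zeta_01; lra|]. lra.
  - assert (HN : forall s, Rabs (N d j s) <= 9 * (216 ^ r * d ^ (2 * r))).
    { intros s. eapply Rle_trans; [apply N_bound; lra|].
      assert (H4 : 4 * INR j + 2 <= 6 * d).
      { unfold d. apply le_INR in Hk. rewrite S_INR in Hk. pose proof (pos_INR j). lra. }
      assert (H5 : (4 * INR j + 2) ^ (3 * j) <= 216 ^ j * d ^ (3 * j)).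
      { replace 216 with (6 ^ 3) by ring. rewrite <- pow_mult, <- Rpow_mult_distr.
        apply pow_incr. pose proof (pos_INR j). lra. }
      assert (Hi : 0 < / d) by (apply Rinv_0_lt_compat; lra).
      assert (H6 : (/ d) ^ S j * d ^ (3 * j) <= d ^ (2 * r)).
      { replace (3 * j)%nat with (j + 2 * j)%nat by lia. rewrite pow_add.
        simpl pow at 1.
        replace (/ d * (/ d) ^ j * (d ^ j * d ^ (2 * j))) with (/ d * ((/ d * d) ^ j * d ^ (2 * j)))
          by (rewrite Rpow_mult_distr; ring).
        rewrite Rinv_l, pow1 by lra.
        apply Rle_trans with (d ^ (2 * j)).
        - assert (/ d <= 1) by (rewrite <- Rinv_1; apply Rinv_le_contravar; lra).
          assert (0 <= d ^ (2 * j)) by (apply pow_le; lra). nra.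
        - apply Rle_pow; [lra|]. lia. }
      assert (H7 : 216 ^ j <= 216 ^ r) by (apply Rle_pow; [lra|lia]).
      assert (0 <= (/ d) ^ S j) by (apply pow_le; lra).
      assert (0 <= 216 ^ j) by (apply pow_le; lra).
      assert (0 <= d ^ (3 * j)) by (apply pow_le; lra).
      assert (0 <= d ^ (2 * r)) by (apply pow_le; lra).
      assert (0 <= (4 * INR j + 2) ^ (3 * j)) by (apply pow_le; pose proof (pos_INR j); lra).
      apply Rle_trans with ((/ d) ^ S j * (9 * (216 ^ j * d ^ (3 * j)))).
      { apply Rmult_le_compat_l; lra. }
      replace ((/ d) ^ S j * (9 * (216 ^ j * d ^ (3 * j)))) with (9 * 216 ^ j * ((/ d) ^ S j * d ^ (3 * j))) by ring.
      replace (9 * (216 ^ r * d ^ (2 * r))) with (9 * 216 ^ r * d ^ (2 * r)) by ring.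
      apply Rmult_le_compat; try lra; apply Rmult_le_pos; lra. }
    eapply Rle_trans; [apply Rabs_triang|]. rewrite Rabs_Ropp.
    pose proof (HN (x + 1 + d)). pose proof (HN (x - Rr - d)). lra.
Qed.


Theorem mainTheorem2 :
  exists C : R, 0 < C /\
  forall (Rr : R) (r : nat), 0 < Rr -> (1 <= r)%nat ->
    let d := INR r in
    let f := psi Rr d in
    (forall (n : nat) (x : R), ex_derive_n f n x) /\
    (forall p : R, f p <> 0 -> - (1 + 2 * INR r) <= p <= Rr + 2 * INR r) /\
    (forall p : R, -1 < p < Rr -> f p = exp (- p)) /\
    (exists I : R,
       is_RInt_gen (fun x => (Derive_n f r x) ^ 2)
         (Rbar_locally m_infty) (Rbar_locally p_infty) I /\
       Rpower (sqrt I) (/ INR r) <= C * INR r ^ 2).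
Proof.
  exists 210000. split; [lra|].
  intros Rr r HR Hr d f.
  assert (Hd1 : 1 <= d) by (unfold d; apply (le_INR 1); lia).
  assert (Hd : 0 < d) by lra.
  set (P := fun n x => mixF n (Z Rr d) x * exp (- x)).
  assert (HP : chain P) by (apply mix_exp_chain, Z_chain; auto).
  assert (HfP : forall x, f x = P O x) by (intros; reflexivity).
  split; [|split; [|split]].
  - apply (chain_ex P f HP HfP).
  - intros p Hp. unfold f, psi in Hp.
    destruct (Rlt_dec p (- (1 + 2 * INR r))) as [H|H].
    + exfalso; apply Hp. change (zeta Rr d p) with (Z Rr d O p). rewrite Z_zero by (auto; left; exact H). ring.
    + destruct (Rlt_dec (Rr + 2 * INR r) p) as [H'|H'].
      * exfalso; apply Hp. change (zeta Rr d p) with (Z Rr d O p). rewrite Z_zero by (auto; right; exact H'). ring.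
      * lra.
  - intros p Hp. unfold f, psi. rewrite zeta_Phi by auto.
    rewrite Phi_right, Phi_left by (auto; lra). ring.
  - set (a := - (1 + 2 * d)). set (b := Rr + 2 * d).
    assert (Hab : a <= b) by (unfold a, b; lra).
    assert (HD : forall x, Derive_n f r x = P r x) by (apply chain_Derive_n; auto).
    assert (Hc : forall x, continuous (P r) x) by (apply chain_cont; auto).
    exists (RInt (fun x => Derive_n f r x ^ 2) a b). split.
    + apply is_RInt_gen_compact; auto.
      * apply ex_RInt_ext with (fun x => P r x ^ 2).
        intros; rewrite HD; reflexivity.
        apply cont_ex. intros x. apply (continuous_mult (P r) (fun x => P r x ^ 1)); [apply Hc|].
        apply (continuous_mult (P r) (fun _ => 1)); [apply Hc|apply continuous_const].
      * intros x Hx. rewrite HD. unfold P. rewrite mix_zero. change ((0 * exp (- x)) ^ 2 = 0)%R. ring.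
        intros k. apply Z_zero; [exact Hd|exact HR|]. unfold a, b in *. lra.
    + set (M := 2 ^ r * (18 * 216 ^ r * d ^ (2 * r))).
      assert (HM : forall x, Rabs (P r x) <= M * exp (- x)).
      { intros x. unfold P. rewrite Rabs_mult, (Rabs_right (exp _)) by (apply Rle_ge, Rlt_le, exp_pos).
        apply Rmult_le_compat_r; [left; apply exp_pos|]. apply mix_bound.
        intros k y Hk. apply Z_bound; auto. }
      assert (HI : RInt (fun x => Derive_n f r x ^ 2) a b <= M ^ 2 * exp (- (2 * a))).
      { rewrite (RInt_ext _ (fun x => P r x ^ 2)) by (intros; rewrite HD; reflexivity).
        apply L2_bound; auto. }
      set (I := RInt (fun x => Derive_n f r x ^ 2) a b) in *.
      assert (HM0 : 0 <= M).
      { unfold M. repeat apply Rmult_le_pos; try lra; apply pow_le; lra. }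
      assert (Hs : sqrt I <= M * exp (1 + 2 * d)).
      { destruct (Rle_dec I 0) as [Hn|Hn].
        - rewrite sqrt_neg_0 by exact Hn. apply Rmult_le_pos; [exact HM0|left; apply exp_pos].
        - rewrite <- (sqrt_pow2 (M * exp (1 + 2 * d))).
          2: apply Rmult_le_pos; [exact HM0|left; apply exp_pos].
          apply sqrt_le_1; [lra|apply pow2_ge_0|].
          replace ((M * exp (1 + 2 * d)) ^ 2) with (M ^ 2 * exp (- (2 * a))); [exact HI|].
          unfold a. replace (- (2 * - (1 + 2 * d))) with ((1 + 2 * d) + (1 + 2 * d)) by ring.
          rewrite exp_plus. ring. }
      assert (He : exp (1 + 2 * d) <= 3 * 9 ^ r).
      { rewrite exp_plus. apply Rmult_le_compat; try (left; apply exp_pos). apply exp_le_3.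
        unfold d. rewrite Rmult_comm, <- exp_pow. apply pow_incr. split; [left; apply exp_pos|].
        replace 2 with (1 + 1) by ring. rewrite exp_plus. pose proof exp_le_3. pose proof (exp_pos 1). nra. }
      set (K := 210000 * INR r ^ 2).
      assert (HK : 0 < K) by (unfold K; fold d; nra).
      assert (Hs2 : sqrt I <= K ^ r).
      { eapply Rle_trans; [exact Hs|]. eapply Rle_trans.
        apply Rmult_le_compat_l; [exact HM0|exact He].
        unfold M, K. fold d. rewrite Rpow_mult_distr, <- pow_mult.
        replace (2 ^ r * (18 * 216 ^ r * d ^ (2 * r)) * (3 * 9 ^ r)) with
          (54 * (2 * 216 * 9) ^ r * d ^ (2 * r)).
        2: { rewrite !Rpow_mult_distr. ring. }
        assert (0 <= d ^ (2 * r)) by (apply pow_le; lra).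
        apply Rmult_le_compat_r; [exact H|].
        assert (H54 : 54 <= 54 ^ r) by (rewrite <- (pow_1 54) at 1; apply Rle_pow; [lra|lia]).
        replace (210000 ^ r) with ((54 * 3888) ^ r * ((210000 / (54 * 3888)) ^ r)).
        2: { rewrite <- Rpow_mult_distr. f_equal. field. }
        replace (2 * 216 * 9) with 3888 by ring.
        rewrite (Rpow_mult_distr 54 3888).
        assert (1 <= (210000 / (54 * 3888)) ^ r) by (apply pow_R1_Rle; lra).
        assert (0 < 3888 ^ r) by (apply pow_lt; lra).
        assert (0 < 54 ^ r) by (apply pow_lt; lra).
        set (q := (210000 / (54 * 3888)) ^ r) in *. set (u := 3888 ^ r) in *. set (w := 54 ^ r) in *.
        assert (54 * u <= w * u) by (apply Rmult_le_compat_r; lra).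
        assert (w * u <= w * u * q) by (rewrite <- (Rmult_1_r (w * u)) at 1; apply Rmult_le_compat_l; nra).
        lra. }
      destruct (Req_dec (sqrt I) 0) as [E0|E0].
      * rewrite E0. unfold Rpower.
        assert (Hl : ln 0 = 0) by (unfold ln; destruct (Rlt_dec 0 0) as [h|h]; [exfalso; lra|reflexivity]).
        rewrite Hl, Rmult_0_r, exp_0. assert (1 <= d ^ 2) by (simpl; nra). unfold K. unfold d in *. lra.
      * assert (Hsp : 0 < sqrt I) by (pose proof (sqrt_pos I); lra).
        eapply Rle_trans.
        assert (Hd' : 0 < INR r) by exact Hd.
        apply Rle_Rpower_l; [left; apply Rinv_0_lt_compat; lra| split; [exact Hsp|exact Hs2]].
        rewrite <- (Rpower_pow r K HK). rewrite Rpower_mult.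
        rewrite Rinv_r by (apply not_0_INR; lia). rewrite Rpower_1 by exact HK. unfold K. lra.
Qed.
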